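(* Let $n\ge k\ge1$ and let $Y\in\mathbb{F}_2^{N_k}$ be fixed with $Y_\emptyset=1$. Let $\ell=(\ell_1,\dots,\ell_k)$ be a uniformly random $k$-tuple of linearly independent linear forms on $\mathbb{F}_2^n$ and, independently, $\varepsilon\in\mathbb{F}_2^k$ uniformly random; set $\alpha_i=1-\varepsilon_i$. Then $$\mathbf{P}\big(\mathcal{L}_{\ell,\alpha}(Y)=0\big)\le 1-2^{-k}.$$
   Context: Let $N_k=\sum_{i=0}^k\binom{n}{i}$ and index the coordinates of $\mathbb{F}_2^{N_k}$ by subsets $S\subseteq[n]$ with $|S|\le k$. For linear forms $\ell_1,\dots,\ell_k$ on $\mathbb{F}_2^n$ (with $\ell_i(x)=\sum_s a_{i,s}x_s$) and $\alpha\in\mathbb{F}_2^k$, expand the polynomial $P_{\ell,\alpha}(x)=\prod_{i=1}^k(\ell_i(x)+\alpha_i)$ in $\mathbb{F}_2[x_1,\dots,x_n]$ and reduce using $x_s^2=x_s$, obtaining the multilinear polynomial $\sum_{S\subseteq[n],|S|\le k}c_S(\ell,\alpha)\prod_{s\in S}x_s$ (the coefficients $c_S(\ell,\alpha)\in\mathbb{F}_2$ are thereby defined; $c_\emptyset$ is the constant term). Define the linear form $\mathcal{L}_{\ell,\alpha}(Y)=\sum_{|S|\le k}c_S(\ell,\alpha)Y_S$ on $\mathbb{F}_2^{N_k}$. *)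

(* Defs.v *)
From HB Require Import structures.
From mathcomp Require Import all_boot all_order all_algebra.
Set Implicit Arguments. Unset Strict Implicit. Unset Printing Implicit Defensive.
Import GRing.Theory Num.Theory.
Local Open Scope ring_scope.

(* A k-tuple of linear forms l_1..l_k on F_2^n is a matrix A : 'M['F_2]_(k,n)
   with l_i(x) = \sum_s A i s * x_s.  Linear independence = row_free A. *)

(* Coefficient c_S(l, alpha) of the multilinear reduction of
   P(x) = \prod_i (\sum_s A i s x_s + alpha_i).  Expanding the product, each
   factor i contributes either alpha_i (f i = None) or A i s * x_s (f i = Some s);
   after x_s^2 = x_s the monomial is \prod_{s in S} x_s with S the set of chosen s. *)
Definition coefS (n k : nat) (A : 'M['F_2]_(k, n)) (alpha : 'I_k -> 'F_2)
    (S : {set 'I_n}) : 'F_2 :=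
  \sum_(f : {ffun 'I_k -> option 'I_n} | [set s | Some s \in codom f] == S)
    \prod_(i < k) (match f i with Some s => A i s | None => alpha i end).

Definition Lform (n k : nat) (A : 'M['F_2]_(k, n)) (alpha : 'I_k -> 'F_2)
    (Y : {set 'I_n} -> 'F_2) : 'F_2 :=
  \sum_(S : {set 'I_n} | (#|S| <= k)%N) coefS A alpha S * Y S.

(* Main.v *)
Require Import Defs.
From HB Require Import structures.
From mathcomp Require Import all_boot all_order all_algebra.
From mathcomp Require Import ring.
Import Order.TTheory GRing.Theory Num.Theory.
Local Open Scope ring_scope.

Lemma F2_sum (F : 'F_2 -> 'F_2) : \sum_(a : 'F_2) F a = F 0 + F 1.
Proof. change (\sum_(a < 2) F a = F 0 + F 1); rewrite big_ord_recl big_ord1; congr (F _ + F _); exact: val_inj. Qed.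

Lemma F2_dbl (x : 'F_2) : x + x = 0.
Proof. by case: x => [[|[|//]]] ?; apply/val_inj. Qed.

Lemma sum_prod (n k : nat) (A : 'M['F_2]_(k, n)) (f : {ffun 'I_k -> option 'I_n}) :
  \sum_(e : {ffun 'I_k -> 'F_2})
    \prod_(i < k) (match f i with Some s => A i s | None => 1 - e i end)
  = (f == [ffun => None])%:R.
Proof.
rewrite -(bigA_distr_bigA (fun i a => match f i with Some s => A i s | None => 1 - a end)) /=.
under eq_bigr => i _ do rewrite F2_sum.
have [->|ne] := eqVneq f [ffun => None].
  by apply: big1 => i _; rewrite ffunE subr0 subrr addr0.
have [i fi] : exists i, f i != None.
  apply/existsP; apply: contraNT ne => /existsPn H; apply/eqP/ffunP => i.
  by rewrite ffunE; apply/eqP; have := H i; rewrite negbK.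
rewrite (bigD1 i) //=; case: (f i) fi => [s|//] _.
by rewrite F2_dbl mul0r.
Qed.

Lemma sum_L (n k : nat) (A : 'M['F_2]_(k, n)) (Y : {set 'I_n} -> 'F_2) :
  \sum_(e : {ffun 'I_k -> 'F_2}) Lform A (fun i => 1 - e i) Y = Y set0.
Proof.
rewrite /Lform exchange_big /=.
under eq_bigr => S _.
  rewrite -big_distrl /= /coefS exchange_big /=.
  under eq_bigr => f _ do rewrite sum_prod.
  over.
rewrite (bigD1 set0) ?cards0 //= [X in _ + X]big1 ?addr0.
  rewrite (bigD1 [ffun => None]) /=; last first.
    apply/eqP/setP => s; rewrite !inE; apply/negbTE/codomP => -[x].
    by rewrite ffunE.
  rewrite eqxx big1 ?addr0 ?mul1r // => f /andP[_ /negbTE ->] //.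
move=> S /andP[_ nS]; rewrite big1 ?mul0r // => f /eqP fS.
have [ef|] := eqVneq f [ffun => None]; last by [].
move: nS; rewrite -fS ef; case/negP; apply/eqP/setP => s; rewrite !inE.
by apply/negbTE/codomP => -[x]; rewrite ffunE.
Qed.

Lemma sum_bool_card (T : finType) (Q : pred T) :
  (\sum_(e : T) (Q e : nat))%N = #|[set e | Q e]|.
Proof.
rewrite -sum1_card [RHS]big_mkcond /=. apply: eq_bigr => e _; rewrite inE; by case: (Q e).
Qed.

Lemma card_pair (T E : finType) (P : pred (T * E)) :
  #|[set p | P p]| = (\sum_(A : T) \sum_(e : E) (P (A, e) : nat))%N.
Proof.
rewrite -sum_bool_card (pair_bigA _ (fun A e => (P (A, e) : nat))) /=.
by apply: eq_bigr => -[A e].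
Qed.

Lemma exists_nz (n k : nat) (A : 'M['F_2]_(k, n)) (Y : {set 'I_n} -> 'F_2)
  (hY : Y set0 = 1) : exists e : {ffun 'I_k -> 'F_2}, Lform A (fun i => 1 - e i) Y != 0.
Proof.
case: (boolP [exists e : {ffun 'I_k -> 'F_2}, Lform A (fun i => 1 - e i) Y != 0]).
  by move/existsP.
move/existsPn => H; exfalso.
have := @sum_L n k A Y; rewrite hY big1 => [/eqP|e _]; first by rewrite eq_sym oner_eq0.
by apply/eqP; have := H e; rewrite negbK.
Qed.

Theorem mainTheorem6 (n k : nat) (hk1 : (1 <= k)%N) (hkn : (k <= n)%N)
    (Y : {set 'I_n} -> 'F_2) (hY : Y set0 = 1) :
  (#|[set p : 'M['F_2]_(k, n) * {ffun 'I_k -> 'F_2} |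
        row_free p.1 && (Lform p.1 (fun i => 1 - p.2 i) Y == 0)]|%:R
   / #|[set p : 'M['F_2]_(k, n) * {ffun 'I_k -> 'F_2} | row_free p.1]|%:R
   : rat) <= 1 - 2%:R ^- k.
Proof.
set M := #|{ffun 'I_k -> 'F_2}|.
have hM : M = (2 ^ k)%N by rewrite /M card_ffun card_Fp // card_ord.
set R := (\sum_(A : 'M['F_2]_(k, n)) (row_free A : nat))%N.
have hB : #|[set p : 'M['F_2]_(k, n) * {ffun 'I_k -> 'F_2} | row_free p.1]| = (R * M)%N.
  rewrite card_pair /R big_distrl /=; apply: eq_bigr => A _.
  case: (row_free A) => /=; last by rewrite mul0n big1.
  by rewrite mul1n sum1_card.
have hG : (#|[set p : 'M['F_2]_(k, n) * {ffun 'I_k -> 'F_2} |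
        row_free p.1 && (Lform p.1 (fun i => (1 - p.2 i)%R) Y == 0%R)]| <= R * (M - 1))%N.
  rewrite card_pair /R big_distrl /=; apply: leq_sum => A _.
  case: (row_free A) => /=; last by rewrite mul0n big1.
  rewrite mul1n sum_bool_card.
  have [e0 He0] := @exists_nz n k A Y hY.
  have := cardsC [set e : {ffun 'I_k -> 'F_2} | Lform A (fun i => 1 - e i) Y == 0].
  rewrite -/M => <-.
  have : (0 < #|~: [set e : {ffun 'I_k -> 'F_2} | Lform A (fun i => (1 - e i)%R) Y == 0%R]|)%N.
    by apply/card_gt0P; exists e0; rewrite !inE.
  move=> h; rewrite -addnBA //; first by rewrite leq_addr.
rewrite hB.
have [R0|Rpos] := posnP R.
  rewrite R0 mul0n mulr0n invr0 mulr0 subr_ge0 invf_le1 ?exprn_gt0 ?exprn_ege1 //.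
rewrite ler_pdivrMr ?ltr0n ?muln_gt0 ?Rpos ?hM ?expn_gt0 //.
apply: le_trans (_ : (R * (2 ^ k - 1))%:R <= _); first by rewrite ler_nat -hM.
rewrite le_eqVlt; apply/orP; left; apply/eqP.
rewrite natrM natrB ?expn_gt0 // natrX natrM natrX.
have h2 : (2%:R ^+ k : rat) != 0 by rewrite expf_neq0.
by field; rewrite expf_neq0.
Qed.
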